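(* Let $E\subseteq\mathbb{F}_q^2$. Then $$\sum_{t\in\mathbb{F}_q^3}\nu_T(t)^2\lesssim \sum_{\theta\in O(\mathbb{F}_q^2)}\sum_{w\in\mathbb{F}_q^2}\lambda_\theta(w)^3.$$
   Context: Standing assumptions: $q=p^n$ with $p$ a prime, $p\equiv 3\pmod 4$, $n$ odd (so $-1$ is not a square in $\mathbb{F}_q$). For $x,y\in\mathbb{F}_q^2$, $\|x-y\|=(x_1-y_1)^2+(x_2-y_2)^2\in\mathbb{F}_q$. $O(\mathbb{F}_q^2)$ is the group of $2\times 2$ matrices $\theta$ over $\mathbb{F}_q$ with $\theta^T\theta=I$. For $E\subseteq\mathbb{F}_q^2$, $\theta\in O(\mathbb{F}_q^2)$ and $w\in\mathbb{F}_q^2$, $\lambda_\theta(w)=|\{(u,v)\in E^2: u-\theta v=w\}|$. For $t=(t_1,t_2,t_3)\in\mathbb{F}_q^3$, $\nu_T(t)=|\{(x,y,z)\in E^3: \|x-y\|=t_1,\ \|x-z\|=t_2,\ \|y-z\|=t_3\}|$. $A\lesssim B$ means $A\le cB$ with $c$ independent of $q$ and $E$. *)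

(* Defs.v *)
From mathcomp Require Import all_boot all_order all_algebra.
Set Implicit Arguments. Unset Strict Implicit. Unset Printing Implicit Defensive.
Import GRing.Theory.
Local Open Scope ring_scope.

Definition dist2 (F : finFieldType) (x y : 'cV[F]_2) : F :=
  \sum_(i < 2) (x i ord0 - y i ord0) ^+ 2.

Definition Orth2 (F : finFieldType) : {set 'M[F]_2} :=
  [set th : 'M[F]_2 | th^T *m th == 1%:M].

Definition lambda_th (F : finFieldType) (E : {set 'cV[F]_2})
  (th : 'M[F]_2) (w : 'cV[F]_2) : nat :=
  #|[set uv : 'cV[F]_2 * 'cV[F]_2 |
      [&& uv.1 \in E, uv.2 \in E & uv.1 - th *m uv.2 == w]]|.

Definition nuT (F : finFieldType) (E : {set 'cV[F]_2}) (t : F * F * F) : nat :=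
  #|[set xyz : 'cV[F]_2 * 'cV[F]_2 * 'cV[F]_2 |
      [&& xyz.1.1 \in E, xyz.1.2 \in E, xyz.2 \in E,
          dist2 xyz.1.1 xyz.1.2 == t.1.1,
          dist2 xyz.1.1 xyz.2 == t.1.2 &
          dist2 xyz.1.2 xyz.2 == t.2]]|.

(* Main.v *)
Require Import Defs.
From mathcomp Require Import all_boot all_order all_algebra.
From mathcomp Require Import all_field.
From mathcomp Require Import ring zify.
Set Implicit Arguments. Unset Strict Implicit. Unset Printing Implicit Defensive.
Import GRing.Theory.
Local Open Scope ring_scope.

Lemma pow3 m : (3 ^ (m.*2.+1) %% 4 = 3)%N.
Proof.
elim: m => // m IH.
by rewrite doubleS expnS expnS mulnA -modnMm IH.
Qed.

Lemma pow_mod4 (p n : nat) : (p %% 4 = 3)%N -> odd n -> (p ^ n %% 4 = 3)%N.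
Proof.
move=> hp hn; rewrite -modnXm hp.
by rewrite -(odd_double_half n) hn add1n pow3.
Qed.

Lemma nonsq (F : finFieldType) (p n : nat) :
  prime p -> p \in [pchar F] -> (p %% 4 = 3)%N -> odd n -> #|F| = (p ^ n)%N ->
  forall r s : F, r ^+ 2 + s ^+ 2 = 0 -> r = 0.
Proof.
move=> pp pc p4 no cF r s h.
have two : (2%:R : F) != 0.
  rewrite -(dvdn_pcharf pc); apply/negP => /(dvdn_leq (isT : (0 < 2)%N)) H.
  have := prime_gt1 pp; move: p4 H; clear; lia.
apply/eqP; apply/negPn/negP => r0.
have s0 : s != 0.
  apply/negP => /eqP s0; move: h; rewrite s0 expr0n /= addr0 => /eqP.
  by rewrite expf_eq0 /= (negPf r0).
pose i := r / s.
have hi : i ^+ 2 = -1.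
  rewrite /i expr_div_n; apply/(mulIf (expf_neq0 2 s0)).
  rewrite mulfVK ?expf_neq0 //; apply/eqP; rewrite -subr_eq0 -h; apply/eqP; ring.
have := expf_card i; rewrite cF.
rewrite (divn_eq (p ^ n) 4) (pow_mod4 p4 no) => E.
have: i = - i.
  rewrite -{1}E exprD mulnC exprM.
  have -> : i ^+ 4 = 1 by rewrite (_ : 4 = 2 * 2)%N // exprM hi; ring.
  by rewrite expr1n mul1r exprS hi; ring.
move/eqP; rewrite -subr_eq0 opprK -mulr2n -mulr_natr mulf_eq0 (negPf two) orbF.
move/eqP => i0; move: hi; rewrite i0 expr0n /= => /eqP; rewrite eq_sym oppr_eq0 oner_eq0 //.
Qed.
Section S.
Variable F : fieldType.

Lemma divsq1 (X Y n : F) : n != 0 -> X ^+ 2 + Y ^+ 2 = n ^+ 2 ->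
  (X / n) ^+ 2 + (Y / n) ^+ 2 = 1.
Proof. by move=> hn k; rewrite !expr_div_n -mulrDl k divff // expf_neq0. Qed.

Lemma divlin (v X Y q1 q2 n : F) : n != 0 -> v * n = X * q1 - Y * q2 ->
  v = X / n * q1 - Y / n * q2.
Proof.
move=> hn k; rewrite (_ : X / n * q1 - Y / n * q2 = (X * q1 - Y * q2) / n).
  by rewrite -k mulfK.
by field.
Qed.

Lemma divlinP (v X Y q1 q2 n : F) : n != 0 -> v * n = X * q1 + Y * q2 ->
  v = X / n * q1 + Y / n * q2.
Proof.
move=> hn k; rewrite (_ : X / n * q1 + Y / n * q2 = (X * q1 + Y * q2) / n).
  by rewrite -k mulfK.
by field.
Qed.

Lemma rotL (a1 a2 b1 b2 q1 q2 v1 v2 : F) :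
  a1 ^+ 2 + a2 ^+ 2 = b1 ^+ 2 + b2 ^+ 2 -> a1 ^+ 2 + a2 ^+ 2 != 0 ->
  a1 * q1 + a2 * q2 = b1 * v1 + b2 * v2 ->
  a1 * q2 - a2 * q1 = b1 * v2 - b2 * v1 ->
  let n := a1 ^+ 2 + a2 ^+ 2 in
  let c := (a1 * b1 + a2 * b2) / n in
  let s := (a1 * b2 - a2 * b1) / n in
  [/\ c ^+ 2 + s ^+ 2 = 1, b1 = c * a1 - s * a2, b2 = s * a1 + c * a2,
      v1 = c * q1 - s * q2 & v2 = s * q1 + c * q2].
Proof.
move=> hab hn hd hx /=; split.
- apply: divsq1 => //; transitivity ((a1^+2+a2^+2)*(b1^+2+b2^+2)); first ring.
  by rewrite -hab expr2.
- by apply: divlin => //; ring.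
- by rewrite addrC; apply: divlinP => //; ring.
- apply: divlin => //; rewrite hab.
  rewrite (_ : v1 * (b1^+2+b2^+2) = (b1*v1+b2*v2)*b1 - (b1*v2-b2*v1)*b2); last ring.
  by rewrite -hd -hx; ring.
- rewrite addrC; apply: divlinP => //; rewrite hab.
  rewrite (_ : v2 * (b1^+2+b2^+2) = (b1*v1+b2*v2)*b2 + (b1*v2-b2*v1)*b1); last ring.
  by rewrite -hd -hx; ring.
Qed.

Lemma refL (a1 a2 b1 b2 q1 q2 v1 v2 : F) :
  a1 ^+ 2 + a2 ^+ 2 = b1 ^+ 2 + b2 ^+ 2 -> a1 ^+ 2 + a2 ^+ 2 != 0 ->
  a1 * q1 + a2 * q2 = b1 * v1 + b2 * v2 ->
  a1 * q2 - a2 * q1 = - (b1 * v2 - b2 * v1) ->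
  let n := a1 ^+ 2 + a2 ^+ 2 in
  let c := (a1 * b1 - a2 * b2) / n in
  let s := (a2 * b1 + a1 * b2) / n in
  [/\ c ^+ 2 + s ^+ 2 = 1, b1 = c * a1 + s * a2, b2 = s * a1 - c * a2,
      v1 = c * q1 + s * q2 & v2 = s * q1 - c * q2].
Proof.
move=> hab hn hd hx /=; split.
- apply: divsq1 => //; transitivity ((a1^+2+a2^+2)*(b1^+2+b2^+2)); first ring.
  by rewrite -hab expr2.
- by apply: divlinP => //; ring.
- by apply: divlin => //; ring.
- apply: divlinP => //; rewrite hab.
  rewrite (_ : v1 * (b1^+2+b2^+2) = (b1*v1+b2*v2)*b1 + (- (b1*v2-b2*v1))*b2); last ring.
  by rewrite -hd -hx; ring.
- apply: divlin => //; rewrite hab.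
  rewrite (_ : v2 * (b1^+2+b2^+2) = (b1*v1+b2*v2)*b2 - (- (b1*v2-b2*v1))*b1); last ring.
  by rewrite -hd -hx; ring.
Qed.

Hypothesis NS : forall r s : F, r ^+ 2 + s ^+ 2 = 0 -> r = 0.
Hypothesis two : (2%:R : F) != 0.

Lemma NS2 (r s : F) : r ^+ 2 + s ^+ 2 = 0 -> r = 0 /\ s = 0.
Proof. by move=> h; split; [apply: (NS h) | apply: (@NS s r); rewrite addrC]. Qed.

Lemma core (u1 u2 v1 v2 p1 p2 q1 q2 : F) :
 u1^+2+u2^+2 = p1^+2+p2^+2 -> v1^+2+v2^+2 = q1^+2+q2^+2 ->
 (v1-u1)^+2+(v2-u2)^+2 = (q1-p1)^+2+(q2-p2)^+2 ->
 exists a b c d : F, [/\ a^+2 + c^+2 = 1, b^+2 + d^+2 = 1, a*b + c*d = 0,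
   (u1 = a* p1 + b* p2 /\ u2 = c* p1 + d* p2) & (v1 = a*q1+b*q2 /\ v2 = c*q1 + d*q2)].
Proof.
move=> hu hv hd.
case: (eqVneq (p1^+2+p2^+2) 0) => hp.
  have [p10 p20] := NS2 hp.
  move: hu; rewrite hp => /NS2 [u10 u20].
  subst.
  case: (eqVneq (q1^+2+q2^+2) 0) => hq.
    have [q10 q20] := NS2 hq.
    move: hv; rewrite hq => /NS2 [v10 v20]; subst.
    by exists 1, 0, 0, 1; split; try split; ring.
  have [] := @rotL q1 q2 v1 v2 q1 q2 v1 v2 (esym hv) hq; first by rewrite -hv; ring.
    by ring.
  move=> /= h1 h2 h3 _ _.
  set c := _ / _ in h1 h2 h3; set s := _ / _ in h1 h2 h3.
  exists c, (- s), s, c; split; try split; try ring.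
  - by rewrite -h1; ring.
  - by rewrite -h1; ring.
  - by rewrite h2; ring.
  - by rewrite h3; ring.
have hdot : p1 * q1 + p2 * q2 = u1 * v1 + u2 * v2.
  apply: (mulfI two).
  rewrite (_ : 2%:R * (u1 * v1 + u2 * v2) = (u1^+2+u2^+2) + (v1^+2+v2^+2) - ((v1-u1)^+2+(v2-u2)^+2)); last ring.
  rewrite hu hv hd; ring.
have hcr : (p1 * q2 - p2 * q1 - (u1 * v2 - u2 * v1)) * (p1 * q2 - p2 * q1 + (u1 * v2 - u2 * v1)) = 0.
  transitivity ((p1^+2+p2^+2) * (q1^+2+q2^+2) - (p1 * q1 + p2 * q2)^+2
     - ((u1^+2+u2^+2) * (v1^+2+v2^+2) - (u1 * v1 + u2 * v2)^+2)); first ring.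
  by rewrite hu hv hdot; ring.
move/eqP: hcr; rewrite mulf_eq0 => /orP [/eqP|/eqP] h.
  have hx : p1 * q2 - p2 * q1 = u1 * v2 - u2 * v1.
    by apply/eqP; rewrite -subr_eq0; apply/eqP.
  have [] := @rotL p1 p2 u1 u2 q1 q2 v1 v2 (esym hu) hp hdot hx.
  move=> /= h1 h2 h3 h4 h5.
  set c := _ / _ in h1 h2 h3 h4 h5; set s := _ / _ in h1 h2 h3 h4 h5.
  exists c, (- s), s, c; split; try split; try ring.
  - by rewrite -h1; ring.
  - by rewrite -h1; ring.
  - by rewrite h2; ring.
  - by rewrite h3; ring.
  - by rewrite h4; ring.
  - by rewrite h5; ring.
have hx : p1 * q2 - p2 * q1 = - (u1 * v2 - u2 * v1).
  by apply/eqP; rewrite -subr_eq0 opprK; apply/eqP.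
have [] := @refL p1 p2 u1 u2 q1 q2 v1 v2 (esym hu) hp hdot hx.
move=> /= h1 h2 h3 h4 h5.
set c := _ / _ in h1 h2 h3 h4 h5; set s := _ / _ in h1 h2 h3 h4 h5.
exists c, s, s, (- c); split; try split; try ring.
- by rewrite -h1; ring.
- by rewrite -h1; ring.
- by rewrite h2; ring.
- by rewrite h3; ring.
- by rewrite h4; ring.
- by rewrite h5; ring.
Qed.
End S.

Section Mat.
Variable F : finFieldType.
Local Notation V := 'cV[F]_2.
Definition i0 : 'I_2 := ord0.
Definition i1 : 'I_2 := ord_max.

Lemma sum2 (f : 'I_2 -> F) : \sum_(k < 2) f k = f i0 + f i1.
Proof. by rewrite big_ord_recr big_ord1; congr (f _ + _); apply: val_inj. Qed.

Lemma ord2P (i : 'I_2) : i = i0 \/ i = i1.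
Proof. by case: i => [[|[|//]]] Hi; [left|right]; apply: val_inj. Qed.

Lemma ord1P (j : 'I_1) : j = ord0.
Proof. by case: j => [[|//]] Hj; apply: val_inj. Qed.

Definition mk2 (a b c d : F) : 'M[F]_2 :=
  \matrix_(i < 2, j < 2) (if (i : nat) == 0%N then (if (j : nat) == 0%N then a else b)
                          else (if (j : nat) == 0%N then c else d)).

Lemma dist2E (x y : V) : dist2 x y = (x i0 ord0 - y i0 ord0) ^+ 2 + (x i1 ord0 - y i1 ord0) ^+ 2.
Proof. by rewrite /dist2 sum2. Qed.

Lemma mulE (a b c d : F) (v : V) :
  (mk2 a b c d *m v) i0 ord0 = a * v i0 ord0 + b * v i1 ord0 /\
  (mk2 a b c d *m v) i1 ord0 = c * v i0 ord0 + d * v i1 ord0.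
Proof. by rewrite !mxE !sum2 !mxE. Qed.

Lemma orthE (a b c d : F) : a^+2 + c^+2 = 1 -> b^+2 + d^+2 = 1 -> a*b + c*d = 0 ->
  mk2 a b c d \in Orth2 F.
Proof.
move=> h1 h2 h3; rewrite inE; apply/eqP/matrixP => i j; rewrite !mxE sum2 !mxE.
case: (ord2P i) => ->; case: (ord2P j) => -> /=.
- by rewrite mulr1n -!expr2.
- by rewrite h3.
- by rewrite mulrC [d * c]mulrC h3.
- by rewrite mulr1n -!expr2.
Qed.

Hypothesis NS : forall r s : F, r ^+ 2 + s ^+ 2 = 0 -> r = 0.
Hypothesis two : (2%:R : F) != 0.

Lemma geo (x y z x' y' z' : V) :
  dist2 x y = dist2 x' y' -> dist2 x z = dist2 x' z' -> dist2 y z = dist2 y' z' ->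
  exists2 th, th \in Orth2 F & (y - th *m y' = x - th *m x' /\ z - th *m z' = x - th *m x').
Proof.
move=> h1 h2 h3.
have hu : (y i0 ord0 - x i0 ord0)^+2 + (y i1 ord0 - x i1 ord0)^+2
        = (y' i0 ord0 - x' i0 ord0)^+2 + (y' i1 ord0 - x' i1 ord0)^+2.
  transitivity (dist2 x y); first by rewrite dist2E; ring.
  by rewrite h1 dist2E; ring.
have hv : (z i0 ord0 - x i0 ord0)^+2 + (z i1 ord0 - x i1 ord0)^+2
        = (z' i0 ord0 - x' i0 ord0)^+2 + (z' i1 ord0 - x' i1 ord0)^+2.
  transitivity (dist2 x z); first by rewrite dist2E; ring.
  by rewrite h2 dist2E; ring.
have hd : ((z i0 ord0 - x i0 ord0) - (y i0 ord0 - x i0 ord0))^+2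
          + ((z i1 ord0 - x i1 ord0) - (y i1 ord0 - x i1 ord0))^+2
        = ((z' i0 ord0 - x' i0 ord0) - (y' i0 ord0 - x' i0 ord0))^+2
          + ((z' i1 ord0 - x' i1 ord0) - (y' i1 ord0 - x' i1 ord0))^+2.
  transitivity (dist2 y z); first by rewrite dist2E; ring.
  by rewrite h3 dist2E; ring.
have [a [b [c [d [o1 o2 o3 [e1 e2] [e3 e4]]]]]] : exists a b c d : F, [/\ a^+2 + c^+2 = 1, b^+2 + d^+2 = 1, a*b + c*d = 0,
   ((y i0 ord0 - x i0 ord0) = a * (y' i0 ord0 - x' i0 ord0) + b * (y' i1 ord0 - x' i1 ord0) /\ (y i1 ord0 - x i1 ord0) = c * (y' i0 ord0 - x' i0 ord0) + d * (y' i1 ord0 - x' i1 ord0)) &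
   ((z i0 ord0 - x i0 ord0) = a * (z' i0 ord0 - x' i0 ord0) + b * (z' i1 ord0 - x' i1 ord0) /\ (z i1 ord0 - x i1 ord0) = c * (z' i0 ord0 - x' i0 ord0) + d * (z' i1 ord0 - x' i1 ord0))]
  := core NS two hu hv hd.
exists (mk2 a b c d); first exact: orthE.
split; apply/matrixP => i j; rewrite (ord1P j) !mxE !sum2 !mxE;
  case: (ord2P i) => -> /=.
- by rewrite -[y i0 ord0](subrK (x i0 ord0)) e1; ring.
- by rewrite -[y i1 ord0](subrK (x i1 ord0)) e2; ring.
- by rewrite -[z i0 ord0](subrK (x i0 ord0)) e3; ring.
- by rewrite -[z i1 ord0](subrK (x i1 ord0)) e4; ring.
Qed.
End Mat.

Section Count.
Variable F : finFieldType.
Local Notation V := 'cV[F]_2.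
Hypothesis NS : forall r s : F, r ^+ 2 + s ^+ 2 = 0 -> r = 0.
Hypothesis two : (2%:R : F) != 0.
Variable E : {set V}.

Definition Pt (a : V * V * V) (t : F * F * F) : bool :=
  [&& a.1.1 \in E, a.1.2 \in E, a.2 \in E,
          dist2 a.1.1 a.1.2 == t.1.1,
          dist2 a.1.1 a.2 == t.1.2 &
          dist2 a.1.2 a.2 == t.2].

Definition Lc (th : 'M[F]_2) (w : V) (c : V * V) : bool :=
  [&& c.1 \in E, c.2 \in E & c.1 - th *m c.2 == w].

Lemma card_sum (T : finType) (P : pred T) : #|[set a | P a]| = (\sum_a (P a : nat))%N.
Proof.
rewrite -sum1_card big_mkcond /=; apply: eq_bigr => a _; rewrite inE.
by case: (P a).
Qed.

Lemma nuT_sum t : nuT E t = (\sum_a (Pt a t : nat))%N.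
Proof. by rewrite /nuT card_sum. Qed.

Lemma lam_sum th w : lambda_th E th w = (\sum_c (Lc th w c : nat))%N.
Proof. by rewrite /lambda_th card_sum. Qed.

Definition G (th : 'M[F]_2) (w : V) (a b : V * V * V) : nat :=
  (Lc th w (a.1.1, b.1.1) * Lc th w (a.1.2, b.1.2) * Lc th w (a.2, b.2))%N.

Definition hh (ab : (V * V * V) * (V * V * V)) : (V * V) * ((V * V) * (V * V)) :=
  ((ab.1.1.1, ab.2.1.1), ((ab.1.1.2, ab.2.1.2), (ab.1.2, ab.2.2))).
Definition hi (c : (V * V) * ((V * V) * (V * V))) : (V * V * V) * (V * V * V) :=
  ((c.1.1, c.2.1.1, c.2.2.1), (c.1.2, c.2.1.2, c.2.2.2)).

Lemma hh_bij : bijective hh.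
Proof.
by exists hi => [[[[x y] z] [[x' y'] z']]|[[x x'] [[y y'] [z z']]]].
Qed.

Lemma lam_cube th w : (lambda_th E th w ^ 3 = \sum_a \sum_b G th w a b)%N.
Proof.
rewrite lam_sum !expnS expn0 muln1.
transitivity (\sum_c1 \sum_c2 \sum_c3 ((Lc th w c1 : nat) * Lc th w c2 * Lc th w c3))%N.
  rewrite big_distrl /=; apply: eq_bigr => c1 _.
  rewrite big_distrl big_distrr /=; apply: eq_bigr => c2 _.
  by rewrite mulnA big_distrr.
rewrite (eq_bigr (fun c1 => \sum_(c : (V * V) * (V * V)) ((Lc th w c1 : nat) * Lc th w c.1 * Lc th w c.2))%N); last first.
  by move=> c1 _; rewrite pair_bigA.
rewrite pair_bigA /= [RHS]pair_bigA (reindex hh) /=; last exact: onW_bij hh_bij.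
by apply: eq_bigr => [[[[x y] z] [[x' y'] z']]] _.
Qed.

Lemma point a b :
  (\sum_t (Pt a t : nat) * Pt b t <= \sum_(th in Orth2 F) \sum_w G th w a b)%N.
Proof.
case: a => [[x y] z]; case: b => [[x' y'] z'].
pose t0 := (dist2 x y, dist2 x z, dist2 y z).
rewrite (bigD1 t0) //= big1 ?addn0; last first.
  move=> t /negPf tn; case Ha: (Pt (x, y, z) t) => //=.
  have : t = t0.
    move: Ha; rewrite /Pt /= => /and5P [_ _ _ /eqP e1 /andP [/eqP e2 /eqP e3]].
    by move: e1 e2 e3; case: t {tn} => [[t1 t2] t3] /= <- <- <-.
  by move=> et; rewrite et eqxx in tn.
case Ha: (Pt (x, y, z) t0); case Hb: (Pt (x', y', z') t0) => //=.
move: Ha; rewrite /Pt /= => /and5P [xE yE zE _ _].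
move: Hb; rewrite /Pt /= => /and5P [xE' yE' zE' /eqP e1 /andP [/eqP e2 /eqP e3]].
have [th thO [ey ez]] := geo NS two (esym e1) (esym e2) (esym e3).
rewrite (bigD1 th) //= (bigD1 (x - th *m x')) //=.
apply: leq_trans (leq_addr _ _); apply: leq_trans (leq_addr _ _).
by rewrite /G /Lc /= ey ez xE yE zE xE' yE' zE' eqxx.
Qed.

End Count.

Lemma two_ne0 (F : finFieldType) (p : nat) :
  prime p -> p \in [pchar F] -> (p %% 4 = 3)%N -> (2%:R : F) != 0.
Proof.
move=> pp pc p4.
rewrite -(dvdn_pcharf pc); apply/negP => /(dvdn_leq (isT : (0 < 2)%N)) H.
have := prime_gt1 pp; move: p4 H; clear; lia.
Qed.

Theorem lemma2p1 :
  exists C : nat,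
  forall (p n : nat) (F : finFieldType),
    prime p -> p \in [pchar F] -> (p %% 4 = 3)%N -> odd n ->
    #|F| = (p ^ n)%N ->
    forall E : {set 'cV[F]_2},
      (\sum_(t : F * F * F) nuT E t ^ 2 <=
       C * \sum_(th in Orth2 F) \sum_(w : 'cV[F]_2) lambda_th E th w ^ 3)%N.
Proof.
exists 1%N => p n F pp pc p4 no cF E.
have NS := nonsq pp pc p4 no cF.
have two := two_ne0 pp pc p4.
rewrite mul1n.
have -> : (\sum_(t : F * F * F) nuT E t ^ 2 =
   \sum_a \sum_b \sum_t (Pt E a t : nat) * Pt E b t)%N.
  rewrite (eq_bigr (fun t => \sum_a \sum_b (Pt E a t : nat) * Pt E b t)%N); last first.
    by move=> t _; rewrite nuT_sum expnS expn1 big_distrlr.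
  rewrite exchange_big; apply: eq_bigr => a _; by rewrite exchange_big.
have -> : (\sum_(th in Orth2 F) \sum_(w : 'cV[F]_2) lambda_th E th w ^ 3 =
   \sum_a \sum_b \sum_(th in Orth2 F) \sum_w G E th w a b)%N.
  rewrite (eq_bigr (fun th => \sum_w \sum_a \sum_b G E th w a b)%N); last first.
    by move=> th _; apply: eq_bigr => w _; rewrite lam_cube.
  rewrite (eq_bigr (fun th => \sum_a \sum_w \sum_b G E th w a b)%N); last first.
    by move=> th _; rewrite exchange_big.
  rewrite exchange_big; apply: eq_bigr => a _.
  rewrite (eq_bigr (fun th => \sum_b \sum_w G E th w a b)%N); last first.
    by move=> th _; rewrite exchange_big.
  by rewrite exchange_big.
apply: leq_sum => a _; apply: leq_sum => b _; exact: point.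
Qed.
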